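(* Let $k,n\in\mathbb{N}$, $N=\{0,\dots,k\}$, and let $\mathcal{M}_n(N)$ be the set of multisets of cardinality $n$ with elements in $N$. For $x\in\mathcal{M}_n(N)$ let $\overrightarrow{x}$ be the non-decreasing sequence of length $n$ listing the elements of $x$, and let $m=(k,k,\dots,k)$ (length $n$). Define $\rho(x)=\mathrm{rank}(m-\overrightarrow{x})$, where $m-\overrightarrow{x}$ is the entrywise difference (a non-increasing sequence over $N$) and $\mathrm{rank}(x_1,\dots,x_n)=\sum_{i=1}^n\binom{n+x_i-i}{x_i-1}$ (with $\binom{a}{-1}=0$). Then $\rho$ is a bijection from $\mathcal{M}_n(N)$ onto an initial segment $\{0,\dots,|\mathcal{M}_n(N)|-1\}$ of $\mathbb{N}_0$ such that for all $x,y\in\mathcal{M}_n(N)$: $x$ is strictly fairer than $y$ (in the maximization sense) iff $\rho(x)<\rho(y)$.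
   Context: Max-min fair comparison for maximization: $x$ is strictly fairer than $y$ iff $\overrightarrow{y}<_{\mathrm{lex}}\overrightarrow{x}$, where $<_{\mathrm{lex}}$ is the strict lexicographic order on sequences of length $n$. *)

(* Defs.v *)
From mathcomp Require Import all_boot.
Set Implicit Arguments. Unset Strict Implicit. Unset Printing Implicit Defensive.

(* A multiset over N = {0,..,k} (k given as the ordinal type 'I_k.+1) is given
   by its multiplicity function.  Multiplicities of a multiset of cardinality n
   are at most n, so we take them in 'I_n.+1 to obtain a finite type. *)
Definition mset (k n : nat) := {ffun 'I_k.+1 -> 'I_n.+1}.

Definition mcard k n (x : mset k n) : nat := \sum_(i < k.+1) (x i : nat).

Definition Mn (k n : nat) : {set mset k n} := [set x | mcard x == n].

Definition melems k n (x : mset k n) : seq nat :=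
  flatten [seq nseq (x i) (i : nat) | i <- enum 'I_k.+1].

Definition vec k n (x : mset k n) : seq nat := sort leq (melems x).

Definition binm1 (a b : nat) : nat := if b == 0 then 0 else 'C(a, b.-1).

(* rank (x_1,...,x_n) = sum_{i=1}^n binom(n + x_i - i, x_i - 1);
   here the 0-indexed position j corresponds to i = j+1 *)
Definition rank (s : seq nat) : nat :=
  \sum_(j < size s) binm1 (size s + nth 0 s j - j.+1) (nth 0 s j).

Definition rho k n (x : mset k n) : nat := rank [seq k - a | a <- vec x].

Definition ltlex (s t : seq nat) : Prop :=
  exists i, [/\ i < size s, i < size t,
                (forall j, j < i -> nth 0 s j = nth 0 t j) & nth 0 s i < nth 0 t i].

(* max-min fairness: x strictly fairer than y iff vec y <lex vec x *)
Definition fairer k n (x y : mset k n) : Prop := ltlex (vec y) (vec x).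

(* Main.v *)
Require Import Defs.
From mathcomp Require Import all_boot zify.

Fixpoint S (b : nat) (s : seq nat) : bool :=
  if s is v :: t then (v <= b) && S v t else true.

Fixpoint ltl (s t : seq nat) : bool :=
  match s, t with
  | a :: s', b :: t' => (a < b) || ((a == b) && ltl s' t')
  | _, _ => false
  end.

Definition Bn n v := 'C(n + v, n.+1).

Lemma rank_cons v s : rank (v :: s) = Bn (size s) v + rank s.
Proof.
rewrite /rank /= big_ord_recl /=; congr (_ + _).
  rewrite /binm1 /Bn; case: v => [|u] /=; first by rewrite addn0 bin_small.
  rewrite -(@bin_sub (size s + u.+1) (size s).+1); last by lia.
  by congr 'C(_, _); lia.
Qed.

Lemma BnS n v : Bn n v.+1 = Bn n v + 'C(n + v, n).
Proof. by rewrite /Bn addnS binS. Qed.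

Lemma Bn0 n : Bn n 0 = 0.
Proof. by rewrite /Bn addn0 bin_small. Qed.

Lemma Bn_mono n v w : v <= w -> Bn n v <= Bn n w.
Proof. move=> h; rewrite /Bn; apply: leq_bin2l; lia. Qed.

Lemma rank_lt s b : S b s -> rank s < 'C(size s + b, size s).
Proof.
elim: s b => [|v t IH] b /=; first by rewrite /rank big_ord0 bin0.
case/andP => hv hS; rewrite rank_cons.
have h1 := IH _ hS.
have h2 : Bn (size t) v + rank t < Bn (size t) v.+1 by rewrite BnS ltn_add2l.
apply: (leq_trans h2); rewrite /Bn; apply: leq_bin2l; lia.
Qed.

Lemma rank_mono s t b : size s = size t -> S b s -> S b t -> ltl s t -> rank s < rank t.
Proof.
elim: s t b => [|v s IH] [|w t] b //= [hsz] /andP [hv hs] /andP [hw ht].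
rewrite !rank_cons -hsz.
case/orP => [hvw | /andP [/eqP hvw hl]].
  have h1 := @rank_lt s v hs.
  apply: (@leq_trans (Bn (size s) v.+1)).
    by rewrite BnS ltn_add2l.
  apply: (@leq_trans (Bn (size s) w)); [exact: Bn_mono | exact: leq_addr].
subst w; rewrite ltn_add2l; exact: (IH t v).
Qed.

Lemma ltl_irr s : ltl s s = false.
Proof. by elim: s => //= a s ->; rewrite ltnn andbF. Qed.

Lemma ltl_total s t : size s = size t -> s != t -> ltl s t || ltl t s.
Proof.
elim: s t => [|a s IH] [|b t] //= [hsz] hne.
case: (ltngtP a b) => //= hab; subst b.
rewrite ?eqxx /=; apply: IH => //.
by apply: contraNneq hne => ->.
Qed.

Lemma ltlexP s t : ltlex s t <-> ltl s t.
Proof.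
elim: s t => [|a s IH] [|b t] /=; try by split => // [[i [] ]].
split.
  case=> [[|i]] [/= hi1 hi2 heq hlt]; first by rewrite hlt.
  have e0 := heq 0 isT; rewrite /= in e0; subst b.
  rewrite ltnn eqxx /=; apply/IH; exists i; split => //.
  by move=> j hj; apply: (heq j.+1).
case/orP => [hab | /andP [/eqP e hl]].
  by exists 0; split.
subst b; case/IH: hl => i [hi1 hi2 heq hlt].
exists i.+1; split => //; by case.
Qed.

Lemma ltl_rev k s t : all (fun a => a <= k) s -> all (fun a => a <= k) t ->
  ltl s t = ltl [seq k - a | a <- t] [seq k - a | a <- s].
Proof.
elim: s t => [|a s IH] [|b t] //= /andP [ha hs] /andP [hb ht].
rewrite -IH //; congr (_ || (_ && _)).
  apply/idP/idP; lia.
apply/eqP/eqP; lia.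
Qed.

Lemma surj n : forall k r, r < 'C(n + k, n) ->
  exists s, [/\ size s = n, S k s & rank s = r].
Proof.
elim: n => [|n IH] k r.
  rewrite bin0 ltnS leqn0 => /eqP ->; exists [::]; split => //.
  by rewrite /rank big_ord0.
move=> hr.
have hr' : r < Bn n k.+1 by rewrite /Bn; move: hr; congr (_ < 'C(_, _)); lia.
have [v [hvk h1 h2]] : exists v, [/\ v <= k, Bn n v <= r & r < Bn n v.+1].
  elim: k {hr} hr' => [|k IHk] h.
    by exists 0; rewrite Bn0.
  case: (ltnP r (Bn n k.+1)) => h'.
    by case: (IHk h') => v [? ? ?]; exists v; split => //; lia.
  by exists k.+1.
have : r - Bn n v < 'C(n + v, n) by move: h2; rewrite BnS; lia.
case/IH => t [ht1 ht2 ht3].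
exists (v :: t); split => /=; first by rewrite ht1.
  by rewrite hvk.
by rewrite rank_cons ht1 ht3; lia.
Qed.

Lemma melems_count k n (x : mset k n) (a : nat) :
  count_mem a (melems x) = if insub a is Some i then (x i : nat) else 0.
Proof.
rewrite /melems count_flatten -map_comp.
rewrite sumnE big_map.
under eq_bigr => j _ do rewrite /= count_nseq /=.
case: insubP => [i _ <-|ha].
  rewrite big_enum /=.
  rewrite (bigD1 i) //= eqxx mul1n big1 ?addn0 // => j hj.
  by case: eqP => // /val_inj e; rewrite e eqxx in hj.
rewrite big1 // => j _.
case: eqP => [e|] //; by rewrite -e ltn_ord in ha.
Qed.

Lemma melems_count_ord k n (x : mset k n) (i : 'I_k.+1) :
  count_mem (i : nat) (melems x) = x i.
Proof. by rewrite melems_count valK. Qed.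

Lemma melems_lt k n (x : mset k n) a : a \in melems x -> a < k.+1.
Proof.
move=> h; apply/negPn/negP => ha.
have : count_mem a (melems x) = 0 by rewrite melems_count insubN.
by move/count_memPn; rewrite h.
Qed.

Lemma size_melems k n (x : mset k n) : size (melems x) = mcard x.
Proof.
rewrite /melems /mcard size_flatten /shape -map_comp sumnE big_map.
rewrite big_enum /=; apply: eq_bigr => i _; by rewrite size_nseq.
Qed.

Lemma vec_sorted k n (x : mset k n) : sorted leq (vec x).
Proof. exact: (sort_sorted leq_total). Qed.

Lemma vec_perm k n (x : mset k n) : perm_eq (vec x) (melems x).
Proof. by rewrite /vec perm_sort. Qed.

Lemma vec_inj k n (x y : mset k n) : vec x = vec y -> x = y.
Proof.
move=> h; apply/ffunP => i; apply: val_inj.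
change (nat_of_ord (x i) = nat_of_ord (y i)).
by rewrite -(@melems_count_ord _ _ x i) -(@melems_count_ord _ _ y i) -(permP (@vec_perm _ _ x)) -(permP (@vec_perm _ _ y)) h.
Qed.

Lemma vec_lt k n (x : mset k n) a : a \in vec x -> a <= k.
Proof. by rewrite (perm_mem (@vec_perm _ _ x)); exact: melems_lt. Qed.

Lemma S_of_sorted k t : forall b, sorted leq t -> (forall a, a \in t -> k - a <= b) ->
  S b [seq k - a | a <- t].
Proof.
elim: t => [|a t IH] b //= hs hb.
rewrite hb ?mem_head //=; apply: IH; first exact: path_sorted hs.
move=> c hc; have := order_path_min leq_trans hs.
move/allP/(_ c hc) => hac; lia.
Qed.

Lemma S_all b s : S b s -> all (fun a => a <= b) s.
Proof.
elim: s b => [|v t IH] b //= /andP [hv hs]; rewrite hv /=.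
apply/allP => c hc; have := allP (IH _ hs) c hc; lia.
Qed.

Lemma S_path k b s : S b s -> path leq (k - b) [seq k - a | a <- s].
Proof.
elim: s b => [|v t IH] b //= /andP [hv hs].
rewrite (IH _ hs) andbT; lia.
Qed.

Lemma S_sorted k b s : S b s -> sorted leq [seq k - a | a <- s].
Proof. case: s => [|v t] //= /andP [_ hs]; exact: S_path. Qed.

Lemma build k n s : size s = n -> S k s ->
  exists2 x, x \in Mn k n & [seq k - a | a <- vec x] = s.
Proof.
move=> hsz hS.
set s' := [seq k - a | a <- s].
have hc (i : 'I_k.+1) : count_mem (i : nat) s' < n.+1.
  by rewrite ltnS -hsz -(size_map (fun a => k - a)); exact: count_size.
pose x : mset k n := [ffun i => Ordinal (hc i)].
have hp : perm_eq (melems x) s'.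
  rewrite /perm_eq; apply/allP => a _; apply/eqP.
  rewrite melems_count; case: insubP => [i _ <-|ha].
    by rewrite ffunE.
  apply/esym/count_memPn; apply: contra ha.
  by case/mapP => c _ ->; lia.
have hv : vec x = s'.
  apply: (sorted_eq leq_trans anti_leq) => //.
  - exact: vec_sorted.
  - exact: (S_sorted k _ _ hS).
  - exact: (perm_trans (vec_perm _ _ x) hp).
exists x.
  by rewrite inE -size_melems (perm_size hp) size_map hsz.
rewrite hv /s' -map_comp -[RHS]map_id; apply/eq_in_map => a ha /=.
have := allP (S_all _ _ hS) a ha; lia.
Qed.

Theorem theorem4 (k n : nat) :
  [/\ (forall x, x \in Mn k n -> rho x < #|Mn k n|),
      {in Mn k n &, injective (@rho k n)},
      (forall r, r < #|Mn k n| -> exists2 x, x \in Mn k n & rho x = r)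
    & {in Mn k n &, forall x y, fairer x y <-> rho x < rho y}].
Proof.
pose f (x : mset k n) := [seq k - a | a <- vec x].
have rhoE x : rho x = rank (f x) by [].
have Sf x : S k (f x).
  apply: S_of_sorted; first exact: vec_sorted.
  by move=> a _; exact: leq_subr.
have szf x : x \in Mn k n -> size (f x) = n.
  by rewrite inE => /eqP <-; rewrite size_map size_sort size_melems.
have fK x : [seq k - a | a <- f x] = vec x.
  rewrite -map_comp -[RHS]map_id; apply/eq_in_map => a ha /=.
  have := vec_lt _ _ x a ha; lia.
have allv (x : mset k n) : all (fun a => a <= k) (vec x).
  by apply/allP => a ha; have := vec_lt _ _ x a ha.
have mono (x y : mset k n) : x \in Mn k n -> y \in Mn k n -> ltl (f x) (f y) -> rho x < rho y.
  move=> hx hy; rewrite !rhoE; apply: (rank_mono _ _ k) => //.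
  by rewrite !szf.
have fairE (x y : mset k n) : fairer x y <-> ltl (f x) (f y).
  by rewrite /fairer ltlexP (ltl_rev k).
have inj : {in Mn k n &, injective (@rho k n)}.
  move=> x y hx hy hr; case: (eqVneq (f x) (f y)) => [e|ne].
    by apply: vec_inj; rewrite -fK e fK.
  have := ltl_total (f x) (f y); rewrite !szf // => /(_ erefl ne).
  by case/orP => /mono h; [have := h hx hy | have := h hy hx]; rewrite hr ltnn.
have bnd (x : mset k n) : x \in Mn k n -> rho x < 'C(n + k, n).
  by move=> hx; rewrite rhoE -(szf x hx); exact: rank_lt.
have hsurj r : r < 'C(n + k, n) -> exists2 x, x \in Mn k n & rho x = r.
  case/surj => s [hs1 hs2 hs3].
  case: (build k n s hs1 hs2) => x hx hfx.
  by exists x => //; rewrite rhoE /f hfx.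
have card : #|Mn k n| = 'C(n + k, n).
  have hu : uniq (map (@rho k n) (enum (Mn k n))).
    rewrite map_inj_in_uniq ?enum_uniq // => x y; rewrite !mem_enum; exact: inj.
  have hm : map (@rho k n) (enum (Mn k n)) =i iota 0 'C(n + k, n).
    move=> r; rewrite mem_iota add0n /=; apply/mapP/idP.
      by case=> x; rewrite mem_enum => hx ->; exact: bnd.
    by case/hsurj => x hx <-; exists x; rewrite ?mem_enum.
  have := perm_size (uniq_perm hu (iota_uniq _ _) hm).
  by rewrite size_map size_iota cardE.
rewrite card; split => //.
move=> x y hx hy; rewrite fairE; split; first exact: mono.
move=> hlt; case: (eqVneq (f x) (f y)) => [e|ne].
  by move: hlt; rewrite !rhoE e ltnn.
have := ltl_total (f x) (f y); rewrite !szf // => /(_ erefl ne).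
case/orP => // /mono h; have := h hy hx; lia.
Qed.
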